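(* Let $V$ be a set of $n$ vertices. Suppose each unordered pair of distinct vertices of $V$ is assigned exactly one of: a red color together with a direction, the color blue, the color green, or a purple color together with a direction; suppose there are $2\alpha\binom n2$ red pairs, $\beta\binom n2$ blue pairs, $\gamma\binom n2$ green pairs and $2\delta\binom n2$ purple pairs. Let $T_g$ be the number of $3$-subsets all of whose pairs are green; $T_p$ the number of $3$-subsets $\{x,y,z\}$ all of whose pairs are purple and directed cyclically ($x\to y\to z\to x$ or reverse); and $T_c$ the number of $3$-subsets $\{x,y,z\}$ (''cherries'') such that, for some labeling, $\{y,z\}$ is blue and $\{x,y\},\{x,z\}$ are red directed $y\to x$ and $z\to x$. Then: (1) $T_g\le\gamma^{3/2}n^3/6$; (2) $T_p\le2\delta^{3/2}n^3/6$; (3) $T_c\le3\alpha\sqrt\beta\, n^3/6$; (4) $T_c\le0.465\,n^3/6$; (5) $T_p+\tfrac14(T_g+T_c)\le\tfrac14\,n^3/6$; (6) $T_c\le\dfrac{3\alpha\beta}{\alpha+\beta}\,n^3/6$, where $\frac{\alpha\beta}{\alpha+\beta}$ is read as $0$ if $\alpha=\beta=0$. *)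

(* Defs.v *)
From HB Require Import structures.
From mathcomp Require Import all_boot all_order all_algebra.
Set Implicit Arguments. Unset Strict Implicit. Unset Printing Implicit Defensive.
Import Order.TTheory GRing.Theory Num.Theory.

(* Colour of an ordered pair (x,y) of distinct vertices:
   RedTo   : the pair is red, directed x -> y
   RedFrom : the pair is red, directed y -> x
   Blue, Green : undirected colours
   PurTo / PurFrom : purple, directed x -> y / y -> x *)
Inductive Col := RedTo | RedFrom | Blue | Green | PurTo | PurFrom.

Definition col_code (c : Col) : nat :=
  match c with RedTo => 0 | RedFrom => 1 | Blue => 2 | Green => 3
  | PurTo => 4 | PurFrom => 5 end%N.
Definition code_col (n : nat) : Col :=
  match n with 0 => RedTo | 1 => RedFrom | 2 => Blue | 3 => Green
  | 4 => PurTo | _ => PurFrom end%N.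
Lemma col_codeK : cancel col_code code_col. Proof. by case. Qed.
HB.instance Definition _ := Equality.copy Col (can_type col_codeK).

Definition col_rev (c : Col) : Col :=
  match c with RedTo => RedFrom | RedFrom => RedTo | PurTo => PurFrom
  | PurFrom => PurTo | Blue => Blue | Green => Green end.

(* c is a valid colouring of the unordered pairs: colour of (y,x) is the
   reverse of colour of (x,y) for distinct x y (c x x is irrelevant). *)
Definition valid_colouring (V : finType) (c : V -> V -> Col) : Prop :=
  forall x y : V, x != y -> c y x = col_rev (c x y).

Definition npairs (V : finType) (P : V -> V -> bool) : nat :=
  #|[set E : {set V} | [exists x, exists y, [&& x != y, E == [set x; y] & P x y]]]|.

Definition n_red (V : finType) (c : V -> V -> Col) :=
  npairs (fun x y => c x y == RedTo).
Definition n_blue (V : finType) (c : V -> V -> Col) :=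
  npairs (fun x y => c x y == Blue).
Definition n_green (V : finType) (c : V -> V -> Col) :=
  npairs (fun x y => c x y == Green).
Definition n_purple (V : finType) (c : V -> V -> Col) :=
  npairs (fun x y => c x y == PurTo).

Definition T_g (V : finType) (c : V -> V -> Col) : nat :=
  #|[set S : {set V} | (#|S| == 3) &&
      [forall x in S, forall y in S, (x != y) ==> (c x y == Green)]]|.

(* 3-subsets {x,y,z} all purple and cyclically directed x->y->z->x
   (the reverse cycle is the same condition after relabeling) *)
Definition T_p (V : finType) (c : V -> V -> Col) : nat :=
  #|[set S : {set V} | [exists x, exists y, exists z,
      [&& x != y, y != z, x != z, S == [set x; y; z],
          c x y == PurTo, c y z == PurTo & c z x == PurTo]]]|.

Definition T_c (V : finType) (c : V -> V -> Col) : nat :=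
  #|[set S : {set V} | [exists x, exists y, exists z,
      [&& x != y, y != z, x != z, S == [set x; y; z],
          c y z == Blue, c y x == RedTo & c z x == RedTo]]]|.

(* Main.v *)
Require Import Defs.
From HB Require Import structures.
From mathcomp Require Import all_boot all_order all_algebra.
From mathcomp Require Import zify ring lra.
Set Implicit Arguments. Unset Strict Implicit. Unset Printing Implicit Defensive.
Import Order.TTheory GRing.Theory Num.Theory.

Section Comb.
Variable V : finType.

Definition S3 (F : V -> V -> V -> nat) := \sum_x \sum_y \sum_z F x y z.

Definition sym (F : V -> V -> V -> nat) x y z :=
  F x y z + F x z y + F y x z + F y z x + F z x y + F z y x.

Lemma S3_add F G : S3 (fun x y z => F x y z + G x y z) = S3 F + S3 G.
Proof.
rewrite /S3 -big_split; apply: eq_bigr => x _; rewrite -big_split.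
by apply: eq_bigr => y _; rewrite -big_split.
Qed.

Lemma S3_sym F : S3 (sym F) = 6 * S3 F.
Proof.
rewrite /sym !S3_add.
have -> : S3 (fun x y z => F x z y) = S3 F.
  by rewrite /S3; apply: eq_bigr => x _; rewrite exchange_big.
have -> : S3 (fun x y z => F y x z) = S3 F by rewrite /S3 exchange_big.
have -> : S3 (fun x y z => F y z x) = S3 F.
  by rewrite /S3 exchange_big; apply: eq_bigr => y _; rewrite exchange_big.
have -> : S3 (fun x y z => F z x y) = S3 F.
  rewrite /S3; under eq_bigr => x _ do rewrite exchange_big.
  by rewrite exchange_big.
have -> : S3 (fun x y z => F z y x) = S3 F.
  rewrite /S3; under eq_bigr => x _ do rewrite exchange_big.
  rewrite exchange_big; apply: eq_bigr => z _; by rewrite exchange_big.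
by rewrite !mulSn mul0n addn0 !addnA.
Qed.

Lemma S3_le F G : (forall x y z, F x y z <= G x y z) -> S3 F <= S3 G.
Proof.
move=> H; rewrite /S3; apply: leq_sum => x _; apply: leq_sum => y _.
by apply: leq_sum => z _.
Qed.

Lemma S3_le_sym F G : (forall x y z, sym F x y z <= sym G x y z) -> S3 F <= S3 G.
Proof.
move=> H; have := S3_le H; rewrite !S3_sym leq_pmul2l //.
Qed.

End Comb.

Section Col.
Variable V : finType.
Variable c : V -> V -> Col.
Hypothesis Hc : valid_colouring c.

Definition isC k x y := (x != y) && (c x y == k).
Definition dist3 (x y z : V) := [&& x != y, y != z & x != z].

Lemma dist3_perm x y z :
  [/\ dist3 x z y = dist3 x y z, dist3 y x z = dist3 x y z,
      dist3 y z x = dist3 x y z, dist3 z x y = dist3 x y z &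
      dist3 z y x = dist3 x y z].
Proof.
rewrite /dist3 (eq_sym y x) (eq_sym z x) (eq_sym z y).
by split; case: (x == y); case: (y == z); case: (x == z).
Qed.

Definition nonred x z := (x != z) && ~~ isC RedTo x z && ~~ isC RedTo z x.

Definition F2L x y z : nat := dist3 x y z && isC RedTo x y && isC RedTo x z.
Definition F2R x y z : nat := 2 * (isC RedTo y x && isC RedTo x z) + (isC RedTo y x && nonred x z).

Lemma F2_pt x y z : sym F2L x y z <= sym F2R x y z.
Proof.
move: x y z. rewrite /F2L /F2R /nonred.
move=> x y z; rewrite /sym.
case D: (dist3 x y z); last first.
  by case: (dist3_perm x y z) => -> -> -> -> ->; rewrite D.
move: (D) => /and3P [xy yz xz].
have yx : y != x by rewrite eq_sym.
have zy : z != y by rewrite eq_sym.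
have zx : z != x by rewrite eq_sym.
case: (dist3_perm x y z) => -> -> -> -> ->; rewrite D /isC xy yz xz yx zy zx /=.
rewrite (Hc xy) (Hc yz) (Hc xz).
by case: (c x y); case: (c x z); case: (c y z).
Qed.
Definition nonpur x z := (x != z) && ~~ isC PurTo x z && ~~ isC PurTo z x.

Definition F5L x y z : nat :=
  4 * [&& dist3 x y z, isC PurTo x y, isC PurTo y z & isC PurTo z x]
  + (dist3 x y z && isC PurTo y x && isC PurTo z x)
  + (dist3 x y z && isC PurTo x y && isC PurTo x z).
Definition F5R x y z : nat :=
  4 * (isC PurTo x y && isC PurTo z x) + (isC PurTo x y + isC PurTo y x) * nonpur x z.

Lemma F5_pt x y z : sym F5L x y z <= sym F5R x y z.
Proof.
rewrite /F5L /F5R /nonpur.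
move: x y z; move=> x y z; rewrite /sym.
case D: (dist3 x y z); last first.
  by case: (dist3_perm x y z) => -> -> -> -> ->; rewrite D.
move: (D) => /and3P [xy yz xz].
have yx : y != x by rewrite eq_sym.
have zy : z != y by rewrite eq_sym.
have zx : z != x by rewrite eq_sym.
case: (dist3_perm x y z) => -> -> -> -> ->; rewrite D /isC xy yz xz yx zy zx /=.
rewrite (Hc xy) (Hc yz) (Hc xz).
by case: (c x y); case: (c x z); case: (c y z).
Qed.

End Col.

Section Sets.
Variable V : finType.

Lemma sum_eq1 (I : finType) (i : I) (b : nat) : \sum_j ((i == j) : nat) * b = b.
Proof.
rewrite (bigD1 i) //= eqxx mul1n big1 ?addn0 // => j /negbTE.
by rewrite eq_sym => ->.
Qed.

Lemma sum_eq1r (I : finType) (i : I) : \sum_j ((j == i) : nat) = 1.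
Proof.
rewrite (bigD1 i) //= eqxx big1 ?addn0 // => j /negbTE -> //.
Qed.

Lemma sum_seq_le (I : finType) (s : seq I) (g : I -> nat) :
  uniq s -> \sum_(t <- s) g t <= \sum_t g t.
Proof.
move=> us; rewrite big_uniq // [X in _ <= X](bigID (fun t => t \in s)) /=.
exact: leq_addr.
Qed.

Lemma S3_prod (f : V -> V -> V -> nat) :
  S3 f = \sum_(t : V * (V * V)) f t.1 t.2.1 t.2.2.
Proof.
rewrite /S3; under eq_bigr => x _ do rewrite pair_bigA /=.
by rewrite pair_bigA.
Qed.

Definition set3 (t : V * (V * V)) := [set t.1; t.2.1; t.2.2].

Lemma fiber_lb (f : V -> V -> V -> nat) (F : {set {set V}}) k :
  (forall S, S \in F -> exists s : seq (V * (V * V)),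
     [/\ uniq s, size s = k & forall t, t \in s -> 0 < f t.1 t.2.1 t.2.2 /\ set3 t = S]) ->
  k * #|F| <= S3 f.
Proof.
move=> H; rewrite S3_prod.
have -> : \sum_(t : V * (V * V)) f t.1 t.2.1 t.2.2 =
          \sum_(S : {set V}) \sum_t ((set3 t == S) : nat) * f t.1 t.2.1 t.2.2.
  rewrite exchange_big; apply: eq_bigr => t _; by rewrite sum_eq1.
rewrite (bigID (fun S => S \in F)) /= -[k * _]addn0; apply: leq_add => //.
rewrite mulnC -sum1_card big_distrl /=; apply: leq_sum => S SF; rewrite mul1n.
have [s [us sz Hs]] := H S SF.
apply: leq_trans (sum_seq_le _ us).
rewrite -sz -sum1_size big_seq [X in _ <= X]big_seq; apply: leq_sum => t ts.
by have [pos /eqP ->] := Hs t ts; rewrite mul1n.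
Qed.

Definition set2 (p : V * V) := [set p.1; p.2].

Lemma set2_eq (a b a' b' : V) : [set a; b] = [set a'; b'] -> a != b ->
  (a' = a /\ b' = b) \/ (a' = b /\ b' = a).
Proof.
move=> /setP E ab.
have hb : (b == a') || (b == b') by rewrite -!in_set2 -E !inE eqxx orbT.
have ha : (a == a') || (a == b') by rewrite -!in_set2 -E !inE eqxx.
case/orP: hb => /eqP hb; case/orP: ha => /eqP ha.
- by move: ab; rewrite ha hb eqxx.
- by right.
- by left.
- by move: ab; rewrite ha hb eqxx.
Qed.

Lemma sum_in_card (F : {set {set V}}) : \sum_E ((E \in F) : nat) = #|F|.
Proof. by rewrite -sum1_card [RHS]big_mkcond /=; apply: eq_bigr => E _; case: (E \in F). Qed.

Lemma fiber_pt (q : V -> V -> bool) (a0 b0 a b : V) :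
  q a b -> a != b -> set2 (a, b) = set2 (a0, b0) ->
  1 <= ((a, b) == (a0, b0)) + (((a, b) == (b0, a0)) * q b0 a0).
Proof.
move=> qab ne e; have [[h1 h2]|[h1 h2]] := set2_eq e ne; rewrite /= in h1 h2.
- by rewrite h1 h2 eqxx.
- by rewrite h1 h2 eqxx qab muln1 addn1.
Qed.

Lemma pairs_gen (q P : V -> V -> bool) :
  (forall x y, q x y -> (x != y) && (P x y || P y x)) ->
  \sum_x \sum_y (q x y : nat) <= \sum_(E : {set V}) ((E \in
     [set E0 : {set V} | [exists x, exists y, [&& x != y, E0 == [set x; y] & P x y]]]) : nat)
     * (1 + \max_(p : V * V) (q p.2 p.1 && q p.1 p.2 : nat)).
Proof.
move=> H1; rewrite pair_bigA /=.
have -> : \sum_(p : V * V) (q p.1 p.2 : nat) =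
          \sum_(E : {set V}) \sum_p ((set2 p == E) : nat) * q p.1 p.2.
  rewrite exchange_big; apply: eq_bigr => t _; by rewrite sum_eq1.
apply: leq_sum => E _.
case: (pickP (fun p : V * V => (set2 p == E) && q p.1 p.2)) => [[a0 b0] /andP[/eqP e0 q0] | none]; last first.
  rewrite big1 // => p _; have := none p; rewrite /=.
  by case: (set2 p == E); case: (q p.1 p.2).
have -> : E \in [set E0 : {set V} | [exists x, exists y, [&& x != y, E0 == [set x; y] & P x y]]].
  rewrite inE; have /andP [ne /orP [Pxy|Pyx]] := H1 _ _ q0.
  - by apply/existsP; exists a0; apply/existsP; exists b0; rewrite ne -e0 eqxx Pxy.
  - apply/existsP; exists b0; apply/existsP; exists a0.
    by rewrite eq_sym ne -e0 /set2 setUC eqxx Pyx.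
rewrite mul1n.
apply: (@leq_trans (\sum_(p : V * V) (((p == (a0, b0)) : nat) + ((p == (b0, a0)) * q b0 a0)))).
  apply: leq_sum => -[a b] _.
  case e: (set2 (a, b) == E); case qp: (q (a, b).1 (a, b).2); rewrite ?muln0 ?mul0n //= mul1n.
  move/eqP: e; rewrite -e0 => e.
  have /andP [ne _] := H1 _ _ qp.
  exact: fiber_pt qp ne e.
rewrite big_split /= sum_eq1r -big_distrl /= sum_eq1r mul1n leq_add2l.
have := @leq_bigmax _ (fun p : V * V => (q p.2 p.1 && q p.1 p.2 : nat)) (b0, a0).
rewrite /= in q0 *; by rewrite q0 /=.

Qed.

Lemma pairs_le2 (q P : V -> V -> bool) :
  (forall x y, q x y -> (x != y) && (P x y || P y x)) ->
  \sum_x \sum_y (q x y : nat) <= 2 * npairs P.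
Proof.
move=> H1; apply: leq_trans (pairs_gen H1) _.
rewrite /npairs -sum_in_card big_distrr /=; apply: leq_sum => E _.
rewrite mulnC leq_mul2r; apply/orP; right.
rewrite ltnS; apply/bigmax_leqP => p _; by case: (_ && _).
Qed.

Lemma pairs_le1 (q P : V -> V -> bool) :
  (forall x y, q x y -> (x != y) && P x y) ->
  (forall x y, q x y -> ~~ q y x) ->
  \sum_x \sum_y (q x y : nat) <= npairs P.
Proof.
move=> H1 H2.
have H1' : forall x y, q x y -> (x != y) && (P x y || P y x).
  by move=> x y /H1 /andP [-> ->].
apply: leq_trans (pairs_gen H1') _.
rewrite /npairs -sum_in_card; apply: leq_sum => E _.
rewrite -[X in _ <= X]muln1 leq_mul2l; apply/orP; right.
rewrite -[X in _ <= X]addn0 leq_add2l leqn0; apply/eqP/big1 => p _.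
by case e: (q p.1 p.2); rewrite ?andbF // (negbTE (H2 _ _ e)).
Qed.

End Sets.

Section Fam.
Variable V : finType.
Variable c : V -> V -> Col.
Hypothesis Hc : valid_colouring c.

Definition Cc x y z : nat := [&& dist3 x y z, isC c Blue y z, isC c RedTo y x & isC c RedTo z x].
Definition Cp x y z : nat := [&& dist3 x y z, isC c PurTo x y, isC c PurTo y z & isC c PurTo z x].
Definition Cg x y z : nat := [&& dist3 x y z, isC c Green x y, isC c Green y z & isC c Green x z].

Lemma Tc_le : 2 * T_c c <= S3 Cc.
Proof.
apply: fiber_lb => S; rewrite inE.
move=> /existsP [x /existsP [y /existsP [z]]].
move=> /andP [xy /andP [yz /andP [xz /andP [/eqP ES /andP [byz /andP [ryx rzx]]]]]].
have yx : y != x by rewrite eq_sym.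
have zy : z != y by rewrite eq_sym.
have zx : z != x by rewrite eq_sym.
exists [:: (x, (y, z)); (x, (z, y))]; split => //.
  by rewrite /= inE !xpair_eqE eqxx /= (negbTE yz).
move=> t; rewrite !inE => /orP [/eqP -> | /eqP ->]; rewrite /Cc /dist3 /isC /set3 /=.
  by rewrite xy yz xz yx zx byz ryx rzx ES.
rewrite xz zy xy zx yx rzx ryx (Hc yz) (eqP byz) /=; split => //.
by rewrite ES setUAC.
Qed.

Lemma Tp_le : 3 * T_p c <= S3 Cp.
Proof.
apply: fiber_lb => S; rewrite inE.
move=> /existsP [x /existsP [y /existsP [z]]].
move=> /andP [xy /andP [yz /andP [xz /andP [/eqP ES /andP [pxy /andP [pyz pzx]]]]]].
have yx : y != x by rewrite eq_sym.
have zy : z != y by rewrite eq_sym.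
have zx : z != x by rewrite eq_sym.
exists [:: (x, (y, z)); (y, (z, x)); (z, (x, y))]; split => //.
  by rewrite /= !inE !xpair_eqE (negbTE xy) (negbTE yz) (eq_sym x z) (negbTE zx) /= ?andbF.
move=> t; rewrite !inE => /orP [/eqP -> | /orP [/eqP -> | /eqP ->]];
  rewrite /Cp /dist3 /isC /set3 /= ?xy ?yz ?xz ?yx ?zy ?zx ?pxy ?pyz ?pzx /=;
  split => //; apply/setP => w; rewrite ES !inE;
  by case: (w == x); case: (w == y); case: (w == z).
Qed.

Lemma Tg_le : 6 * T_g c <= S3 Cg.
Proof.
apply: fiber_lb => S; rewrite inE => /andP [/eqP S3c /forallP HG].
have G : forall a b, a \in S -> b \in S -> a != b -> c a b == Green.
  move=> a b aS bS ab; have /implyP := HG a; move=> /(_ aS) /forallP /(_ b) /implyP /(_ bS).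
  by move/implyP/(_ ab).
have : 0 < #|S| by rewrite S3c.
case/card_gt0P => x xS.
have : #|S :\ x| == 2 by move: (cardsD1 x S); rewrite S3c xS add1n => -[<-].
case/cards2P => y [z [yz E]].
have yS : y \in S :\ x by rewrite E !inE eqxx.
have zS : z \in S :\ x by rewrite E !inE eqxx orbT.
move: yS zS; rewrite !inE => /andP [yx yS] /andP [zx zS].
have xy : x != y by rewrite eq_sym.
have xz : x != z by rewrite eq_sym.
have zy : z != y by rewrite eq_sym.
have ES : S = [set x; y; z].
  by rewrite -(setD1K xS) E; apply/setP => w; rewrite !inE orbA.
exists [:: (x, (y, z)); (x, (z, y)); (y, (x, z)); (y, (z, x)); (z, (x, y)); (z, (y, x))].
split => //.
  rewrite /= !inE !xpair_eqE (negbTE xy) (negbTE yz) (negbTE xz) (negbTE yx) (negbTE zx) (negbTE zy).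
  by rewrite /= ?andbF.
have Gr : forall a b, a \in S -> b \in S -> a != b -> isC c Green a b.
  by move=> a b aS bS ab; rewrite /isC ab G.
move=> t; rewrite !inE => /or4P [/eqP -> | /eqP -> | /eqP -> | /or3P [/eqP -> | /eqP -> | /eqP ->]];
  rewrite /Cg /dist3 /set3 /= ?xy ?yz ?xz ?yx ?zy ?zx ?Gr //=;
  split => //; apply/setP => w; rewrite ES !inE;
  by case: (w == x); case: (w == y); case: (w == z).
Qed.

End Fam.

Section Gen.
Variable V : finType.

Lemma sum_prod2 (a b : V -> nat) : \sum_y \sum_z a y * b z = (\sum_y a y) * (\sum_z b z).
Proof. by rewrite big_distrl /=; apply: eq_bigr => y _; rewrite big_distrr. Qed.

Lemma sq_split (a : V -> bool) :
  \sum_y \sum_z ((a y && a z && (y != z)) : nat) + \sum_y (a y : nat) = (\sum_y (a y : nat)) ^ 2.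
Proof.
rewrite expnS expn1 -sum_prod2 -big_split /=; apply: eq_bigr => y _.
rewrite [RHS](bigD1 y) //= [X in _ = _ + X](eq_bigr (fun z => (a y && a z && (y != z) : nat))).
  by rewrite (bigD1 y) //= eqxx andbF add0n addnC; congr (_ + _); case: (a y).
move=> z zy; rewrite eq_sym zy andbT; by case: (a y); case: (a z).
Qed.

End Gen.

Section Facts.
Variable V : finType.
Variable c : V -> V -> Col.
Hypothesis Hc : valid_colouring c.

Definition odeg k x := \sum_y (isC c k x y : nat).
Definition ideg k x := \sum_y (isC c k y x : nat).

Lemma leq_b1 (b b1 : bool) : (b -> b1) -> (b : nat) <= b1.
Proof. by case: b; case: b1 => // /(_ isT). Qed.
Lemma leq_b2 (b b1 b2 : bool) : (b -> b1 && b2) -> (b : nat) <= b1 * b2.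
Proof. by case: b; case: b1; case: b2 => // /(_ isT). Qed.

Lemma isC_neq k x y : isC c k x y -> x != y.
Proof. by case/andP. Qed.

Lemma sum_ideg k : \sum_x ideg k x = \sum_x odeg k x.
Proof. by rewrite /ideg /odeg exchange_big. Qed.

Lemma sum_red : \sum_x odeg RedTo x <= n_red c.
Proof.
apply: pairs_le1 => [x y /andP [-> ->] // | x y /andP [xy /eqP cxy]].
by rewrite /isC negb_and eq_sym xy (Hc xy) cxy.
Qed.

Lemma sum_pur : \sum_x odeg PurTo x <= n_purple c.
Proof.
apply: pairs_le1 => [x y /andP [-> ->] // | x y /andP [xy /eqP cxy]].
by rewrite /isC negb_and eq_sym xy (Hc xy) cxy.
Qed.

Lemma sum_blue : \sum_x odeg Blue x <= 2 * n_blue c.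
Proof. by apply: pairs_le2 => x y /andP [-> ->]. Qed.

Lemma sum_green : \sum_x odeg Green x <= 2 * n_green c.
Proof. by apply: pairs_le2 => x y /andP [-> ->]. Qed.

Lemma Cc_apex1 x : \sum_y \sum_z Cc c x y z <= ideg RedTo x * ideg RedTo x.
Proof.
rewrite -sum_prod2; apply: leq_sum => y _; apply: leq_sum => z _.
by apply: leq_b2 => /and4P [_ _ -> ->].
Qed.

Lemma Cc_apex2 x : \sum_y \sum_z Cc c x y z <= 2 * n_blue c.
Proof.
apply: leq_trans sum_blue; apply: leq_sum => y _; apply: leq_sum => z _.
by apply: leq_b1 => /and4P [_ -> _ _].
Qed.

Lemma Cg_1 x : \sum_y \sum_z Cg c x y z <= odeg Green x * odeg Green x.
Proof.
rewrite -sum_prod2; apply: leq_sum => y _; apply: leq_sum => z _.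
by apply: leq_b2 => /and4P [_ -> _ ->].
Qed.

Lemma Cg_2 x : \sum_y \sum_z Cg c x y z <= 2 * n_green c.
Proof.
apply: leq_trans sum_green; apply: leq_sum => y _; apply: leq_sum => z _.
by apply: leq_b1 => /and4P [_ _ -> _].
Qed.

Lemma Cp_1 x : \sum_y \sum_z Cp c x y z <= odeg PurTo x * ideg PurTo x.
Proof.
rewrite -sum_prod2; apply: leq_sum => y _; apply: leq_sum => z _.
by apply: leq_b2 => /and4P [_ -> _ ->].
Qed.

Lemma Cp_2 x : \sum_y \sum_z Cp c x y z <= n_purple c.
Proof.
apply: leq_trans sum_pur; apply: leq_sum => y _; apply: leq_sum => z _.
by apply: leq_b1 => /and4P [_ _ -> _].
Qed.

Lemma Cc_base : S3 (Cc c) <= \sum_y odeg RedTo y * odeg Blue y.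
Proof.
rewrite /S3 exchange_big; apply: leq_sum => y _.
rewrite -sum_prod2; apply: leq_sum => x _; apply: leq_sum => z _.
by apply: leq_b2 => /and4P [_ -> -> _].
Qed.

Lemma Cg_sq : S3 (Cg c) <= \sum_x odeg Green x * odeg Green x.
Proof. by apply: leq_sum => x _; apply: Cg_1. Qed.

Lemma sum_neq (x : V) : \sum_y ((x != y) : nat) = #|V|.-1.
Proof.
rewrite -(cardC1 x) -sum1_card [RHS]big_mkcond /=; apply: eq_bigr => y _.
by rewrite !inE eq_sym; case: (y == x).
Qed.

Lemma deg_bound (x : V) (f : V -> nat) :
  (forall y, f y <= (x != y)) -> \sum_y f y <= #|V|.-1.
Proof. by move=> H; rewrite -(sum_neq x); apply: leq_sum => y _; apply: H. Qed.

Lemma pt4 (x y : V) : isC c RedTo y x + isC c RedTo x y + nonred c x y <= (x != y).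
Proof.
case: (eqVneq x y) => [->|xy]; first by rewrite /isC /nonred eqxx.
have yx : y != x by rewrite eq_sym.
rewrite /nonred /isC xy yx (Hc xy) /=; by case: (c x y).
Qed.

Lemma pt4b (x y : V) : isC c Blue x y <= nonred c x y.
Proof.
case: (eqVneq x y) => [->|xy]; first by rewrite /isC /nonred eqxx.
have yx : y != x by rewrite eq_sym.
rewrite /nonred /isC xy yx (Hc xy) /=; by case: (c x y).
Qed.

Lemma pt6 (x y : V) : isC c RedTo x y + isC c Blue x y <= (x != y).
Proof.
case: (eqVneq x y) => [->|xy]; first by rewrite /isC eqxx.
rewrite /isC xy /=; by case: (c x y).
Qed.

Lemma pt5 (x y : V) : isC c RedTo y x + isC c RedTo x y + isC c Blue x y + isC c Green x y
   + isC c PurTo y x + isC c PurTo x y <= (x != y).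
Proof.
case: (eqVneq x y) => [->|xy]; first by rewrite /isC eqxx.
have yx : y != x by rewrite eq_sym.
rewrite /isC xy yx (Hc xy) /=; by case: (c x y).
Qed.

Lemma pt5b (x y : V) : nonpur c x y + isC c PurTo y x + isC c PurTo x y <= (x != y).
Proof.
case: (eqVneq x y) => [->|xy]; first by rewrite /isC /nonpur eqxx.
have yx : y != x by rewrite eq_sym.
rewrite /nonpur /isC xy yx (Hc xy) /=; by case: (c x y).
Qed.

Definition nrdeg x := \sum_y (nonred c x y : nat).
Definition npdeg x := \sum_y (nonpur c x y : nat).

Lemma F2_fin : \sum_x odeg RedTo x ^ 2 <=
  \sum_x (2 * (ideg RedTo x * odeg RedTo x) + ideg RedTo x * nrdeg x) + \sum_x odeg RedTo x.
Proof.
have H := S3_le_sym (F2_pt Hc).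
have -> : \sum_x odeg RedTo x ^ 2 = S3 (F2L c) + \sum_x odeg RedTo x.
  rewrite /S3 -big_split /=; apply: eq_bigr => x _.
  rewrite /odeg -sq_split; congr (_ + _); apply: eq_bigr => y _; apply: eq_bigr => z _.
  rewrite /F2L /dist3; case r1: (isC c RedTo x y); case r2: (isC c RedTo x z); rewrite ?andbF //=.
  by rewrite (isC_neq r1) (isC_neq r2) /= !andbT.
rewrite leq_add2r; apply: leq_trans H _; rewrite /S3 leq_eqVlt; apply/orP; left; apply/eqP.
apply: eq_bigr => x _; rewrite /F2R.
rewrite /ideg /odeg /nrdeg -!sum_prod2 big_distrr /= -big_split /=.
apply: eq_bigr => y _; rewrite big_distrr /= -big_split /=; apply: eq_bigr => z _.
by rewrite !mulnb.
Qed.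

Lemma S3_F5L : S3 (F5L c) + \sum_x ideg PurTo x + \sum_x odeg PurTo x =
  4 * S3 (Cp c) + \sum_x ideg PurTo x ^ 2 + \sum_x odeg PurTo x ^ 2.
Proof.
rewrite /S3 big_distrr /= -!big_split /=; apply: eq_bigr => x _.
rewrite /ideg /odeg -!sq_split big_distrr /= -!big_split /=.
apply: eq_bigr => y _.
have -> : \sum_z F5L c x y z = 4 * \sum_z Cp c x y z
   + \sum_z (isC c PurTo y x && isC c PurTo z x && (y != z) : nat)
   + \sum_z (isC c PurTo x y && isC c PurTo x z && (y != z) : nat).
  rewrite big_distrr /= -!big_split /=; apply: eq_bigr => z _.
  rewrite /F5L /dist3; congr (_ + _ + _).
  - case r1: (isC c PurTo y x); case r2: (isC c PurTo z x); rewrite ?andbF //=.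
    have n1 : x != y by rewrite eq_sym (isC_neq r1).
    have n2 : x != z by rewrite eq_sym (isC_neq r2).
    by rewrite n1 n2 /= !andbT.
  - case r1: (isC c PurTo x y); case r2: (isC c PurTo x z); rewrite ?andbF //=.
    by rewrite (isC_neq r1) (isC_neq r2) /= !andbT.
lia.
Qed.

Lemma F5_fin : 4 * S3 (Cp c) + \sum_x ideg PurTo x ^ 2 + \sum_x odeg PurTo x ^ 2 <=
  \sum_x (4 * (odeg PurTo x * ideg PurTo x) + (odeg PurTo x + ideg PurTo x) * npdeg x)
  + \sum_x ideg PurTo x + \sum_x odeg PurTo x.
Proof.
rewrite -S3_F5L -!addnA leq_add2r.
apply: leq_trans (S3_le_sym (F5_pt Hc)) _; rewrite /S3 leq_eqVlt; apply/orP; left; apply/eqP.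
apply: eq_bigr => x _; rewrite /F5R.
rewrite /ideg /odeg /npdeg -[(\sum_y (isC c PurTo x y : nat)) + _]big_split /= -!sum_prod2 big_distrr /= -big_split /=.
apply: eq_bigr => y _; rewrite big_distrr /= -big_split /=; apply: eq_bigr => z _.
by rewrite !mulnb.
Qed.

End Facts.

Local Open Scope ring_scope.

Section Real.
Variable R : rcfType.

Lemma min_sqrt (t d M : R) : 0 <= d -> 0 <= M -> t <= d ^+ 2 -> t <= M -> t <= d * Num.sqrt M.
Proof.
move=> d0 M0 td tM; have sM := sqrtr_ge0 M.
case: (lerP (d ^+ 2) M) => h.
  have : Num.sqrt (d ^+ 2) <= Num.sqrt M by rewrite ler_sqrt.
  rewrite sqrtr_sqr ger0_norm //.
  move=> dM; apply: le_trans td _; rewrite expr2; exact: ler_wpM2l.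
have : Num.sqrt M <= d.
  have : Num.sqrt M <= Num.sqrt (d ^+ 2) by rewrite ler_sqrt ?sqr_ge0 // ltW.
  by rewrite sqrtr_sqr ger0_norm.
move=> Md; apply: le_trans tM _; rewrite -{1}(sqr_sqrtr M0) expr2.
exact: ler_wpM2r.
Qed.

Lemma sum_sqrt_bound (V : finType) (t d : V -> R) (M : R) : 0 <= M ->
  (forall x, 0 <= d x) -> (forall x, t x <= d x ^+ 2) -> (forall x, t x <= M) ->
  \sum_x t x <= Num.sqrt M * \sum_x d x.
Proof.
move=> M0 d0 H1 H2; rewrite mulr_sumr; apply: ler_sum => x _.
by rewrite mulrC; apply: min_sqrt.
Qed.

End Real.

Lemma bin2_2 n : ('C(n, 2) * 2 = n * n.-1)%N.
Proof.
case: n => [|n] //; rewrite bin2 /= -[RHS]odd_double_half -muln2.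
by rewrite oddM /=; case: (odd n).
Qed.

Local Open Scope ring_scope.

Section PV.
Variable R : realFieldType.

Lemma pv4R (I O B N S : R) : 0 <= I -> 0 <= O -> 0 <= B -> 0 <= N ->
  I + O + N <= S -> B <= N ->
  200*(O*B) + 31*(2*(I*O) + I*N + O) + 31*(S*I) <= 31*(S*S + S) + 31*(O*O) + 31*(S*O).
Proof.
move=> i0 o0 b0 n0 h1 h2.
set u := S - I - O.
have e1 : 0 <= O * u - O * B by rewrite -mulrBr; apply: mulr_ge0 => //; rewrite /u; lra.
have e2 : 0 <= I * u - I * N by rewrite -mulrBr; apply: mulr_ge0 => //; rewrite /u; lra.
have sq := sqr_ge0 (186 * O - 107 * u).
have uu : 0 <= u ^+ 2 := sqr_ge0 u.
have So : 0 <= S - O by rewrite /u in h1 *; lra.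
rewrite -subr_ge0.
have -> : 31 * (S * S + S) + 31 * (O * O) + 31 * (S * O) -
  (200 * (O * B) + 31 * (2 * (I * O) + I * N + O) + 31 * (S * I)) =
  31 * (S - O) + ((186 * O - 107 * u) ^+ 2 + 83 * u ^+ 2) / 372 + 200 * (O * u - O * B)
  + 31 * (I * u - I * N).
  by rewrite /u; field.
have ha : 0 <= ((186 * O - 107 * u) ^+ 2 + 83 * u ^+ 2) / 372.
  have h83 : 0 <= 83 * u ^+ 2 by apply: mulr_ge0; [apply: ler0n | apply: sqr_ge0].
  apply: divr_ge0; last by apply: ler0n.
  by apply: addr_ge0.
lra.
Qed.

End PV.

Section PV5.
Variable R : realFieldType.
Lemma pv5R (RI RO BL GR PI PO NP S : R) : 0 <= RI -> 0 <= RO -> 0 <= BL -> 0 <= GR ->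
  0 <= PI -> 0 <= PO -> 0 <= NP ->
  RI + RO + BL + GR + PI + PO <= S -> NP + PI + PO <= S ->
  2*(4*(PO*PI) + (PO+PI)*NP + PI + PO) + GR*GR + 3*(RO*BL) <=
  (S+1)*(S+1) + 2*(PI*PI) + 2*(PO*PO).
Proof.
move=> ri ro bl gr pi po np h1 h2.
set p := PI + PO. set x := RO + BL + GR.
have e1 : 0 <= 2 * p * (S - p - NP) by apply: mulr_ge0; [apply: mulr_ge0; rewrite /p; lra | rewrite /p; lra].
have e2 : 0 <= (S - p - x) * (S - p + x) by apply: mulr_ge0; rewrite /p /x; lra.
have e3 : 0 <= (RO - BL) ^+ 2 := sqr_ge0 _.
have e4 : 0 <= RO * BL by apply: mulr_ge0.
have e5 : 0 <= 2 * GR * (RO + BL) by apply: mulr_ge0; [apply: mulr_ge0 | lra].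
have e6 : 0 <= 3 * (PI - PO) ^+ 2 by apply: mulr_ge0; [apply: ler0n | apply: sqr_ge0].
have e7 : 0 <= 2 * (S - p) + 1 by rewrite /p; lra.
rewrite -subr_ge0.
have -> : (S+1)*(S+1) + 2*(PI*PI) + 2*(PO*PO) -
  (2*(4*(PO*PI) + (PO+PI)*NP + PI + PO) + GR*GR + 3*(RO*BL)) =
  (2 * (S - p) + 1) + 3 * (PI - PO) ^+ 2 + 2 * p * (S - p - NP) +
  (S - p - x) * (S - p + x) + ((RO - BL) ^+ 2 + RO * BL + 2 * GR * (RO + BL)).
  rewrite /p /x; ring.
lra.
Qed.

End PV5.


Local Open Scope ring_scope.

Section RealAux.
Variable R : rcfType.

Lemma cube (g M nr sr : R) : 0 <= g -> 0 <= sr -> sr <= nr -> M = g * nr * sr ->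
  Num.sqrt M * M <= g * Num.sqrt g * nr ^+ 3.
Proof.
move=> g0 s0 snr EM.
have n0 : 0 <= nr by apply: le_trans snr.
have M0 : 0 <= M by rewrite EM; apply: mulr_ge0 => //; apply: mulr_ge0.
have Mle : M <= g * nr ^+ 2 by rewrite EM expr2 mulrA; apply: ler_wpM2l => //; apply: mulr_ge0.
have sM : Num.sqrt M <= Num.sqrt g * nr.
  have : Num.sqrt M <= Num.sqrt (g * nr ^+ 2) by rewrite ler_sqrt // mulr_ge0 // sqr_ge0.
  by rewrite sqrtrM // sqrtr_sqr ger0_norm.
apply: le_trans (_ : (Num.sqrt g * nr) * (g * nr ^+ 2) <= _).
  by apply: ler_pM => //; apply: sqrtr_ge0.
by rewrite le_eqVlt; apply/orP; left; apply/eqP; ring.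
Qed.

Lemma harm (o b S l : R) : 0 <= o -> 0 <= b -> o + b <= S ->
  o * b <= S * (l ^+ 2 * o + (1 - l) ^+ 2 * b).
Proof.
move=> o0 b0 ob.
have X0 : 0 <= l ^+ 2 * o + (1 - l) ^+ 2 * b.
  by apply: addr_ge0; apply: mulr_ge0 => //; apply: sqr_ge0.
have e : (o + b) * (l ^+ 2 * o + (1 - l) ^+ 2 * b) - o * b = (l * o - (1 - l) * b) ^+ 2 by ring.
apply: le_trans (_ : (o + b) * (l ^+ 2 * o + (1 - l) ^+ 2 * b) <= _).
  by rewrite -subr_ge0 e sqr_ge0.
exact: ler_wpM2r.
Qed.

End RealAux.

Section Parts.
Variable R : rcfType.
Variable V : finType.
Variable c : V -> V -> Col.
Hypothesis Hc : valid_colouring c.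

Notation n := #|V|.
Notation nR := (#|V|%:R : R).

Lemma natle (a b : nat) : (a <= b)%N -> (a%:R : R) <= b%:R.
Proof. by rewrite ler_nat. Qed.

Lemma part4 s : n = s.+1 -> (T_c c)%:R <= (465%:R / 1000%:R) * (nR ^+ 3 / 6).
Proof.
move=> ns.
set o := fun x => (odeg c RedTo x)%:R : R.
set i := fun x => (ideg c RedTo x)%:R : R.
set b := fun x => (odeg c Blue x)%:R : R.
set nr := fun x => (nrdeg c x)%:R : R.
set sR := (s%:R : R).
have A : 2 * (T_c c)%:R <= \sum_x o x * b x.
  have := natle (leq_trans (Tc_le Hc) (Cc_base c)).
  by rewrite natrM natr_sum; under eq_bigr => x _ do rewrite natrM.
have F2 : \sum_x o x * o x <= \sum_x (2 * (i x * o x) + i x * nr x) + \sum_x o x.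
  have e1 : \sum_x o x * o x = (\sum_x odeg c RedTo x ^ 2)%:R.
    by rewrite natr_sum; apply: eq_bigr => x _; rewrite natrX expr2.
  have e2 : ((\sum_x (2 * (ideg c RedTo x * odeg c RedTo x) + ideg c RedTo x * nrdeg c x))
      + \sum_x odeg c RedTo x)%:R = \sum_x (2 * (i x * o x) + i x * nr x) + \sum_x o x.
    rewrite natrD !natr_sum; congr (_ + _); apply: eq_bigr => x _.
    by rewrite natrD !natrM.
  by rewrite e1 -e2; apply: natle; apply: F2_fin.
have Eio : \sum_x i x = \sum_x o x.
  by by rewrite /i /o -!natr_sum sum_ideg.
have P x : 200 * (o x * b x) + 31 * (2 * (i x * o x) + i x * nr x + o x) + 31 * (sR * i x)
    <= 31 * (sR * sR + sR) + 31 * (o x * o x) + 31 * (sR * o x).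
  apply: pv4R; rewrite ?ler0n //.
    have := natle (@deg_bound V x (fun y => isC c RedTo y x + isC c RedTo x y + nonred c x y)%N
       (fun y => pt4 Hc x y)).
    by rewrite !big_split /= !natrD ns.
  apply: natle; apply: leq_sum => y _; exact: pt4b.
have S : \sum_x (200 * (o x * b x) + 31 * (2 * (i x * o x) + i x * nr x + o x) + 31 * (sR * i x))
    <= \sum_x (31 * (sR * sR + sR) + 31 * (o x * o x) + 31 * (sR * o x)).
  by apply: ler_sum => x _; exact: P x.
rewrite !big_split /= -!mulr_sumr !big_split /= -!mulr_sumr sumr_const in S.
rewrite !big_split /= -!mulr_sumr in F2.
rewrite Eio in S.
have cV : (sR *+ #|(xpredT : pred V)|) = sR * (sR + 1).
  by rewrite -mulr_natr -[#|_|]/#|V| ns -natr1.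
rewrite cV in S.
have h3 : sR * (sR + 1) * (sR + 1) <= (sR + 1) ^+ 3.
  rewrite exprS expr2 mulrA ler_wpM2r //.
    by apply: addr_ge0 => //; apply: ler0n.
  rewrite ler_wpM2r //; first by apply: addr_ge0 => //; apply: ler0n.
  lra.
have -> : nR = sR + 1 by rewrite ns -natr1.
lra.
Qed.
Lemma part5 s : n = s.+1 ->
  (T_p c)%:R + 4^-1 * ((T_g c)%:R + (T_c c)%:R) <= 4^-1 * (nR ^+ 3 / 6).
Proof.
move=> ns.
set ri := fun x => (ideg c RedTo x)%:R : R.
set ro := fun x => (odeg c RedTo x)%:R : R.
set bl := fun x => (odeg c Blue x)%:R : R.
set gr := fun x => (odeg c Green x)%:R : R.
set pi := fun x => (ideg c PurTo x)%:R : R.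
set po := fun x => (odeg c PurTo x)%:R : R.
set np := fun x => (npdeg c x)%:R : R.
set sR := (s%:R : R).
set cp := ((S3 (Cp c))%:R : R).
have A : 2 * (T_c c)%:R <= \sum_x ro x * bl x.
  have := natle (leq_trans (Tc_le Hc) (Cc_base c)).
  by rewrite natrM natr_sum; under eq_bigr => x _ do rewrite natrM.
have G : 6 * (T_g c)%:R <= \sum_x gr x * gr x.
  have := natle (leq_trans (Tg_le c) (Cg_sq c)).
  by rewrite natrM natr_sum; under eq_bigr => x _ do rewrite natrM.
have Pp : 3 * (T_p c)%:R <= cp.
  by have := natle (Tp_le c); rewrite natrM.
have F5 : 4 * cp + \sum_x pi x * pi x + \sum_x po x * po x <=
    \sum_x (4 * (po x * pi x) + (po x + pi x) * np x) + \sum_x pi x + \sum_x po x.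
  have e1 : 4 * cp + \sum_x pi x * pi x + \sum_x po x * po x =
     (4 * S3 (Cp c) + \sum_x ideg c PurTo x ^ 2 + \sum_x odeg c PurTo x ^ 2)%N%:R.
    rewrite 2!natrD natrM !natr_sum; congr (_ + _ + _); try (apply: eq_bigr => x _;
    by rewrite natrX expr2).
    by rewrite /cp /S3 natr_sum.
  have e2 : ((\sum_x (4 * (odeg c PurTo x * ideg c PurTo x) + (odeg c PurTo x + ideg c PurTo x) * npdeg c x))
      + \sum_x ideg c PurTo x + \sum_x odeg c PurTo x)%N%:R =
      \sum_x (4 * (po x * pi x) + (po x + pi x) * np x) + \sum_x pi x + \sum_x po x.
    rewrite !natrD !natr_sum; congr (_ + _ + _); apply: eq_bigr => x _.
    by rewrite natrD !natrM natrD.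
  by rewrite e1 -e2; apply: natle; apply: F5_fin.
have P x : 2 * (4 * (po x * pi x) + (po x + pi x) * np x + pi x + po x) + gr x * gr x
     + 3 * (ro x * bl x) <= (sR + 1) * (sR + 1) + 2 * (pi x * pi x) + 2 * (po x * po x).
  apply: (@pv5R _ (ri x)); rewrite ?ler0n //.
    have := natle (@deg_bound V x _ (fun y => pt5 Hc x y)).
    by rewrite !big_split /= !natrD ns.
  have := natle (@deg_bound V x _ (fun y => pt5b Hc x y)).
  by rewrite !big_split /= !natrD ns.
have S : \sum_x (2 * (4 * (po x * pi x) + (po x + pi x) * np x + pi x + po x) + gr x * gr x
     + 3 * (ro x * bl x)) <= \sum_x ((sR + 1) * (sR + 1) + 2 * (pi x * pi x) + 2 * (po x * po x)).
  by apply: ler_sum => x _; exact: P x.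
have cst : \sum_(x : V) ((sR + 1) * (sR + 1)) = (sR + 1) ^+ 3.
  by rewrite sumr_const -mulr_natr -[#|_|]/#|V| ns -natr1 exprS expr2 mulrC.
have Ssum : \sum_x ((sR + 1) * (sR + 1) + 2 * (pi x * pi x) + 2 * (po x * po x)) =
   (sR + 1) ^+ 3 + 2 * \sum_x pi x * pi x + 2 * \sum_x po x * po x.
  by rewrite !big_split /= cst -!mulr_sumr.
rewrite Ssum in S.
rewrite !big_split /= -!mulr_sumr !big_split /= -!mulr_sumr in S.
rewrite !big_split /= -!mulr_sumr in F5.
have -> : nR = sR + 1 by rewrite ns -natr1.
lra.
Qed.

Lemma part1 s gamma : n = s.+1 -> 0 <= gamma ->
  2 * (n_green c)%:R = gamma * nR * s%:R ->
  (T_g c)%:R <= gamma * Num.sqrt gamma * (nR ^+ 3 / 6).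
Proof.
move=> ns g0 Eg.
set M := 2 * (n_green c)%:R : R.
have M0 : 0 <= M by apply: mulr_ge0 => //; apply: ler0n.
have T6 : 6 * (T_g c)%:R <= \sum_x ((\sum_y \sum_z Cg c x y z)%:R : R).
  by have := natle (Tg_le c); rewrite natrM /S3 natr_sum.
have B : \sum_x ((\sum_y \sum_z Cg c x y z)%:R : R) <= Num.sqrt M * \sum_x ((odeg c Green x)%:R : R).
  apply: sum_sqrt_bound => //.
  - by move=> x; rewrite expr2 -natrM; apply: natle; apply: Cg_1.
  - by move=> x; rewrite /M -natrM; apply: natle; apply: Cg_2.
have Sd : \sum_x ((odeg c Green x)%:R : R) <= M.
  by rewrite /M -natrM -natr_sum; apply: natle; apply: sum_green.
have K : Num.sqrt M * M <= gamma * Num.sqrt gamma * nR ^+ 3.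
  apply: (@cube _ gamma M nR s%:R) => //.
  by rewrite ns ler_nat.
have K2 : Num.sqrt M * \sum_x ((odeg c Green x)%:R : R) <= Num.sqrt M * M.
  by apply: ler_wpM2l; [exact: sqrtr_ge0 | exact: Sd].
lra.
Qed.

Lemma part2 s delta : n = s.+1 -> 0 <= delta ->
  (n_purple c)%:R = delta * nR * s%:R ->
  (T_p c)%:R <= 2 * (delta * Num.sqrt delta) * (nR ^+ 3 / 6).
Proof.
move=> ns d0 Ed.
set M := (n_purple c)%:R : R.
have M0 : 0 <= M by apply: ler0n.
have T3 : 3 * (T_p c)%:R <= \sum_x ((\sum_y \sum_z Cp c x y z)%:R : R).
  by have := natle (Tp_le c); rewrite natrM /S3 natr_sum.
set po := fun x => (odeg c PurTo x)%:R : R.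
set pi := fun x => (ideg c PurTo x)%:R : R.
have B : \sum_x ((\sum_y \sum_z Cp c x y z)%:R : R) <= Num.sqrt M * \sum_x ((po x + pi x) / 2).
  apply: sum_sqrt_bound => //.
  - move=> x; apply: divr_ge0; last by apply: ler0n.
    by apply: addr_ge0; apply: ler0n.
  - move=> x; apply: le_trans (_ : po x * pi x <= _).
      by rewrite -natrM; apply: natle; apply: Cp_1.
    have := sqr_ge0 (po x - pi x); move=> h.
    have e : ((po x + pi x) / 2) ^+ 2 - po x * pi x = (po x - pi x) ^+ 2 / 4.
      by field.
    rewrite -subr_ge0 e; apply: divr_ge0 => //; apply: ler0n.
  - by move=> x; apply: natle; apply: Cp_2.
have Sd : \sum_x ((po x + pi x) / 2) <= M.
  have e : \sum_x ((po x + pi x) / 2) = \sum_x po x.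
    rewrite -mulr_suml big_split /= /pi /po -!natr_sum sum_ideg.
    by field.
  rewrite e /po -natr_sum; apply: natle; exact: sum_pur Hc.
have K : Num.sqrt M * M <= delta * Num.sqrt delta * nR ^+ 3.
  apply: (@cube _ delta M nR s%:R) => //.
  by rewrite ns ler_nat.
have K2 : Num.sqrt M * \sum_x ((po x + pi x) / 2) <= Num.sqrt M * M.
  by apply: ler_wpM2l; [exact: sqrtr_ge0 | exact: Sd].
lra.
Qed.

Lemma part3 s alpha beta : n = s.+1 -> 0 <= alpha -> 0 <= beta ->
  (n_red c)%:R = alpha * nR * s%:R ->
  2 * (n_blue c)%:R = beta * nR * s%:R ->
  (T_c c)%:R <= 3 * alpha * Num.sqrt beta * (nR ^+ 3 / 6).
Proof.
move=> ns a0 b0 Ea Eb.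
set M := 2 * (n_blue c)%:R : R.
have M0 : 0 <= M by apply: mulr_ge0 => //; apply: ler0n.
have T2 : 2 * (T_c c)%:R <= \sum_x ((\sum_y \sum_z Cc c x y z)%:R : R).
  by have := natle (Tc_le Hc); rewrite natrM /S3 natr_sum.
have B : \sum_x ((\sum_y \sum_z Cc c x y z)%:R : R) <= Num.sqrt M * \sum_x ((ideg c RedTo x)%:R : R).
  apply: sum_sqrt_bound => //.
  - by move=> x; rewrite expr2 -natrM; apply: natle; apply: Cc_apex1.
  - by move=> x; rewrite /M -natrM; apply: natle; apply: Cc_apex2.
have Sd : \sum_x ((ideg c RedTo x)%:R : R) <= alpha * nR * s%:R.
  by rewrite -Ea -natr_sum sum_ideg; apply: natle; exact: sum_red Hc.
have sn : (s%:R : R) <= nR by rewrite ns ler_nat.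
have sM : Num.sqrt M <= Num.sqrt beta * nR.
  have : Num.sqrt M <= Num.sqrt (beta * nR ^+ 2).
    rewrite ler_sqrt; last by apply: mulr_ge0 => //; apply: sqr_ge0.
    rewrite /M Eb expr2 mulrA; apply: ler_wpM2l => //; apply: mulr_ge0 => //; apply: ler0n.
  by rewrite [Num.sqrt (beta * _)]sqrtrM // sqrtr_sqr ger0_norm //; apply: ler0n.
have K : Num.sqrt M * \sum_x ((ideg c RedTo x)%:R : R) <= (Num.sqrt beta * nR) * (alpha * nR * nR).
  apply: ler_pM => //; first exact: sqrtr_ge0.
    by apply: sumr_ge0 => x _; apply: ler0n.
  apply: le_trans Sd _; apply: ler_wpM2l => //; apply: mulr_ge0 => //; apply: ler0n.
have -> : 3 * alpha * Num.sqrt beta * (nR ^+ 3 / 6) = (Num.sqrt beta * nR) * (alpha * nR * nR) / 2.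
  by rewrite !exprS expr0; field.
lra.
Qed.

Lemma part6 s alpha beta : n = s.+1 -> 0 <= alpha -> 0 <= beta ->
  (n_red c)%:R = alpha * nR * s%:R ->
  2 * (n_blue c)%:R = beta * nR * s%:R ->
  (T_c c)%:R <= 3 * (alpha * beta / (alpha + beta)) * (nR ^+ 3 / 6).
Proof.
move=> ns a0 b0 Ea Eb.
set o := fun x => (odeg c RedTo x)%:R : R.
set b := fun x => (odeg c Blue x)%:R : R.
set sR := (s%:R : R).
set l := beta / (alpha + beta).
have A : 2 * (T_c c)%:R <= \sum_x o x * b x.
  have := natle (leq_trans (Tc_le Hc) (Cc_base c)).
  by rewrite natrM natr_sum; under eq_bigr => x _ do rewrite natrM.
have P x : o x * b x <= sR * (l ^+ 2 * o x + (1 - l) ^+ 2 * b x).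
  apply: harm; rewrite ?ler0n //.
  have := natle (@deg_bound V x _ (fun y => pt6 c x y)).
  by rewrite !big_split /= !natrD ns.
have S : \sum_x o x * b x <= sR * (l ^+ 2 * \sum_x o x + (1 - l) ^+ 2 * \sum_x b x).
  apply: le_trans (ler_sum _ (fun x _ => P x)) _.
  by rewrite -mulr_sumr big_split /= -!mulr_sumr.
have So : \sum_x o x <= alpha * nR * sR.
  by rewrite -Ea /o -natr_sum; apply: natle; exact: sum_red Hc.
have Sb : \sum_x b x <= beta * nR * sR.
  by rewrite -Eb /b -natrM -natr_sum; apply: natle; exact: sum_blue.
have s0 : 0 <= sR by apply: ler0n.
have sn : sR <= nR by rewrite /sR ns ler_nat.
set H := alpha * beta / (alpha + beta).
have key : l ^+ 2 * alpha + (1 - l) ^+ 2 * beta = H.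
  rewrite /l /H; have [ab0|ab0] := eqVneq (alpha + beta) 0.
    have a00 : alpha = 0 by lra.
    have b00 : beta = 0 by lra.
    by rewrite a00 b00 !mul0r !mulr0 addr0.
  by field.
have H0 : 0 <= H by rewrite /H; apply: divr_ge0; [apply: mulr_ge0 | apply: addr_ge0].
have S2 : \sum_x o x * b x <= sR * (H * nR * sR).
  apply: le_trans S _; apply: ler_wpM2l => //.
  have h1 : l ^+ 2 * \sum_x o x <= l ^+ 2 * (alpha * nR * sR) := ler_wpM2l (sqr_ge0 l) So.
  have h2 : (1 - l) ^+ 2 * \sum_x b x <= (1 - l) ^+ 2 * (beta * nR * sR) :=
    ler_wpM2l (sqr_ge0 (1 - l)) Sb.
  have e : l ^+ 2 * (alpha * nR * sR) + (1 - l) ^+ 2 * (beta * nR * sR) = H * nR * sR.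
    by rewrite -key; ring.
  lra.
have S3' : sR * (H * nR * sR) <= H * nR ^+ 3.
  rewrite (_ : sR * (H * nR * sR) = H * (nR * (sR * sR))); last by ring.
  rewrite !exprS expr0 mulr1; apply: ler_wpM2l => //; apply: ler_wpM2l; first exact: ler0n.
  by apply: ler_pM.
have -> : 3 * H * (nR ^+ 3 / 6) = H * nR ^+ 3 / 2 by field.
lra.
Qed.

End Parts.

Local Open Scope ring_scope.

Theorem lemma5p1 (R : rcfType) (V : finType) (c : V -> V -> Col)
  (alpha beta gamma delta : R) :
  valid_colouring c ->
  (1 < #|V|)%N ->
  (n_red c)%:R = 2 * alpha * 'C(#|V|, 2)%:R ->
  (n_blue c)%:R = beta * 'C(#|V|, 2)%:R ->
  (n_green c)%:R = gamma * 'C(#|V|, 2)%:R ->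
  (n_purple c)%:R = 2 * delta * 'C(#|V|, 2)%:R ->
  let N := (#|V|%:R : R) ^+ 3 / 6 in
  (T_g c)%:R <= gamma * Num.sqrt gamma * N /\
      (T_p c)%:R <= 2 * (delta * Num.sqrt delta) * N /\
      (T_c c)%:R <= 3 * alpha * Num.sqrt beta * N /\
      (T_c c)%:R <= (465%:R / 1000%:R) * N /\
      (T_p c)%:R + 4^-1 * ((T_g c)%:R + (T_c c)%:R) <= 4^-1 * N /\
      (T_c c)%:R <= 3 * (alpha * beta / (alpha + beta)) * N.
Proof.
move=> Hc Hn Hr Hb Hg Hp N.
have [s ns] : exists s, #|V| = s.+1 by exists #|V|.-1; rewrite prednK // ltnW.
have es : #|V|.-1 = s by rewrite ns.
set C := ('C(#|V|, 2)%:R : R).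
set nR := (#|V|%:R : R).
set sR := (s%:R : R).
have C2 : C * 2 = nR * sR by rewrite /C /nR /sR -natrM bin2_2 natrM es.
have P0 : 0 < nR * sR.
  apply: mulr_gt0; rewrite /nR /sR ?ns ltr0n //.
  by move: Hn; rewrite ns.
have Er : (n_red c)%:R = alpha * nR * sR.
  rewrite Hr; transitivity (alpha * (C * 2)); first by ring.
  by rewrite C2 mulrA.
have Eb : 2 * (n_blue c)%:R = beta * nR * sR.
  rewrite Hb; transitivity (beta * (C * 2)); first by ring.
  by rewrite C2 mulrA.
have Eg : 2 * (n_green c)%:R = gamma * nR * sR.
  rewrite Hg; transitivity (gamma * (C * 2)); first by ring.
  by rewrite C2 mulrA.
have Ep : (n_purple c)%:R = delta * nR * sR.
  rewrite Hp; transitivity (delta * (C * 2)); first by ring.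
  by rewrite C2 mulrA.
have nonneg : forall (x : R) (k : nat), k%:R = x * nR * sR -> 0 <= x.
  move=> x k E; rewrite -(pmulr_lge0 _ P0) mulrA -E; exact: ler0n.
have a0 : 0 <= alpha by apply: (nonneg _ _ Er).
have b0 : 0 <= beta by apply: (nonneg _ (2 * n_blue c)%N); rewrite natrM.
have g0 : 0 <= gamma by apply: (nonneg _ (2 * n_green c)%N); rewrite natrM.
have d0 : 0 <= delta by apply: (nonneg _ _ Ep).
rewrite /N.
split; first exact: (part1 ns g0 Eg).
split; first exact: (part2 Hc ns d0 Ep).
split; first exact: (part3 Hc ns a0 b0 Er Eb).
split; first exact: (part4 _ Hc ns).
split; first exact: (part5 _ Hc ns).
exact: (part6 Hc ns a0 b0 Er Eb).
Qed.
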